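(* Let $n\ge 2$ and $k\in\{0,\dots,n-1\}$, and let $\vec m=(m_1,\dots,m_{n-1})^t\in\mathbb{Z}_{\ge0}^{n-1}$ satisfy $k+\sum_{i=1}^{n-1} i\,m_i\equiv 0 \pmod n$. Put $N=\sum_{i=1}^{n-1}m_i$ and define heights $h_1,\dots,h_N$ by: $h_1=\dots=h_{m_{n-1}}=n-1$, the next $m_{n-2}$ of them equal $n-2$, and so on, the last $m_1$ of them equal $1$ (i.e. the sequence is weakly decreasing and the value $i$ occurs exactly $m_i$ times). Put $h_0=n$ and $w_a=2n-h_{a-1}-h_a$ for $1\le a\le N$. Then the parent graph associated to $\vec m$, i.e. the Ferrers graph with interpolating matrix $\begin{pmatrix} w_1&\cdots&w_N\\ h_1&\cdots&h_N\end{pmatrix}$, has $$\sum_{a=1}^{N} h_a\,(w_1+w_2+\dots+w_a)=n\,\vec m^{\,t}C^{-1}\vec m$$ nodes, where $C$ is the Cartan matrix of $sl(n)$.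
   Context: $C$ is the $(n-1)\times(n-1)$ Cartan matrix of $sl(n)$, $C_{ij}=2\delta_{i,j}-\delta_{i,j-1}-\delta_{i,j+1}$, whose inverse is $(C^{-1})_{ij}=i(n-j)/n$ for $i\le j$ and $j(n-i)/n$ for $i>j$. The Ferrers graph with interpolating matrix $\begin{pmatrix} w_1&\cdots&w_N\\ h_1&\cdots&h_N\end{pmatrix}$ (positive integers) is the diagram whose profile, starting from $(0,-H)$ with $H=\sum h_a$, moves $w_1$ steps right, $h_1$ steps up, $w_2$ steps right, etc., ending at $(W,0)$ with $W=\sum w_a$; its number of nodes is $\sum_{a=1}^N h_a(w_1+\dots+w_a)$. *)

(* Defs.v *)
From mathcomp Require Import all_boot all_order all_algebra.
Set Implicit Arguments. Unset Strict Implicit. Unset Printing Implicit Defensive.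
Import GRing.Theory Num.Theory.

Definition cartan (n : nat) : 'M[rat]_(n.-1) :=
  \matrix_(i < n.-1, j < n.-1)
    ((2 * (i == j :> nat))%N%:R - (i.+1 == j :> nat)%N%:R - (j.+1 == i :> nat)%N%:R)%R.

(* The vector m = (m_1,...,m_{n-1}) is given as m : 'I_(n.-1) -> nat,
   with m_i = m (i-1) (0-based).  *)
Definition mvec (n : nat) (m : 'I_n.-1 -> nat) : 'rV[rat]_(n.-1) :=
  \row_i ((m i)%:R)%R.

Definition heights (n : nat) (m : 'I_n.-1 -> nat) : seq nat :=
  flatten [seq nseq (m j) j.+1 | j <- rev (enum 'I_n.-1)].

Definition hgt (n : nat) (m : 'I_n.-1 -> nat) (a : nat) : nat :=
  if a == 0 then n else nth 0 (heights m) a.-1.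

Definition wdt (n : nat) (m : 'I_n.-1 -> nat) (a : nat) : nat :=
  2 * n - hgt m a.-1 - hgt m a.

Definition ferrers_nodes (w h : nat -> nat) (N : nat) : nat :=
  \sum_(1 <= a < N.+1) h a * \sum_(1 <= b < a.+1) w b.

(* Main.v *)
Require Import Defs.
From mathcomp Require Import all_boot all_order all_algebra.
From mathcomp Require Import zify ring lra.
Import GRing.Theory Num.Theory.
Local Open Scope ring_scope.

Lemma ord_rev_pairwise p :
  pairwise (fun a b : 'I_p => (b.+1 < a.+1)%N) (rev (enum 'I_p)).
Proof.
rewrite -sorted_pairwise; last by move=> a b c /= h1 h2; lia.
rewrite rev_sorted.
have : sorted (fun a b : nat => (a < b)%N) (map val (enum 'I_p)).
  by rewrite val_enum_ord iota_ltn_sorted.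
by rewrite sorted_map.
Qed.

Lemma pairwise_nseq c (x : nat) : pairwise geq (nseq c x).
Proof. by elim: c => //= c ->; rewrite andbT all_nseq /= leqnn orbT. Qed.

Lemma flatten_pairwise (I : eqType) (f c : I -> nat) (js : seq I) :
  pairwise (fun a b => (f b < f a)%N) js ->
  pairwise geq (flatten [seq nseq (c j) (f j) | j <- js]).
Proof.
elim: js => //= j js IH /andP[hj /IH hp].
rewrite pairwise_cat hp pairwise_nseq andbT.
rewrite andbT; apply/allrelP => x y /nseqP[-> _] /flattenP[t].
move=> /mapP[j' hj' ->] /nseqP[-> _].
by move/allP: hj => /(_ _ hj') /ltnW.
Qed.

Definition hs (n : nat) (s : seq nat) (a : nat) : nat :=
  if a == 0%N then n else nth 0%N s a.-1.
Definition ws (n : nat) (s : seq nat) (a : nat) : nat :=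
  (2 * n - hs n s a.-1 - hs n s a)%N.
Definition pr (s : seq nat) : rat := \sum_(x <- s) \sum_(y <- s) (minn x y)%:R.
Definition sm (s : seq nat) : rat := \sum_(x <- s) x%:R.

Lemma cast3 n x y : (x <= n)%N -> (y <= n)%N ->
  ((2 * n - x - y)%N%:R : rat) = 2 * n%:R - x%:R - y%:R.
Proof. by move=> hx hy; rewrite !natrB ?natrM //; lia. Qed.

Lemma telesc n (h : nat -> nat) a : (forall b, h b <= n)%N ->
  \sum_(1 <= b < a.+2) ((2 * n - h b.-1 - h b)%N%:R : rat)
  = 2 * n%:R * a.+1%:R - (h 0%N)%:R - 2 * (\sum_(1 <= b < a.+1) (h b)%:R) - (h a.+1)%:R.
Proof.
move=> hb; elim: a => [|a IH].
  by rewrite big_nat1 big_geq // cast3 //=; ring.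
rewrite big_nat_recr //= IH cast3 //= (big_nat_recr a.+1) //= -[a.+2]addn1 -[a.+1]addn1 !natrD.
ring.
Qed.

Lemma hs_rcons n s x a : (a <= size s)%N -> hs n (rcons s x) a = hs n s a.
Proof.
rewrite /hs; case: a => //= a ha; rewrite nth_rcons.
by have -> : (a < size s)%N by [].
Qed.

Lemma hs_rcons_last n s x : hs n (rcons s x) (size s).+1 = x.
Proof. by rewrite /hs /= nth_rcons ltnn eqxx. Qed.

Lemma sum_min_const x s : all (fun y => x <= y)%N s ->
  \sum_(y <- s) ((minn y x)%:R : rat) = (size s)%:R * x%:R.
Proof.
elim: s => [|y s IH] /=; first by rewrite big_nil mul0r.
move=> /andP[hy /IH hs']; rewrite big_cons hs' -(addn1 (size s)) natrD.
have -> : minn y x = x by lia.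
ring.
Qed.

Lemma sm_nth n s a : (a <= size s)%N ->
  \sum_(1 <= b < a.+1) ((hs n s b)%:R : rat) = \sum_(0 <= b < a) (nth 0%N s b)%:R.
Proof.
move=> _; rewrite big_add1 /=; apply: eq_bigr => b _; by [].
Qed.

Lemma key n s : pairwise geq s -> all (fun x => x <= n)%N s ->
  ((ferrers_nodes (ws n s) (hs n s) (size s))%:R : rat)
   = n%:R * pr s - (sm s) ^+ 2.
Proof.
elim/last_ind: s => [|s x IH].
  by rewrite /ferrers_nodes /pr /sm !big_nil => _ _ /=; ring.
move=> hp hall; move: hp.
rewrite -cats1 pairwise_cat cats1 => /and3P[hrel hps _].
have hx : all (fun y => x <= y)%N s.
  by apply/allP => y hy; move/allrelP: hrel => /(_ y x hy); rewrite mem_seq1 eqxx => /(_ isT).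
move: hall; rewrite -cats1 all_cat /= andbT cats1 => /andP[hall hxn].
have hb : forall b, (hs n (rcons s x) b <= n)%N.
  move=> [|b] //=; rewrite /hs /=; case: (ltnP b (size (rcons s x))) => hb.
    by move/allP: (hall) => _; have := mem_nth 0%N hb; rewrite -cats1 mem_cat mem_seq1 => /orP[/(allP hall)|/eqP->].
  by rewrite nth_default.
have E : (\sum_(1 <= a < (size s).+1) hs n (rcons s x) a * \sum_(1 <= b < a.+1) ws n (rcons s x) b
   = ferrers_nodes (ws n s) (hs n s) (size s))%N.
  apply: eq_big_nat => a /andP[_ ha]; rewrite hs_rcons //; congr (_ * _)%N.
  apply: eq_big_nat => b /andP[_ hb']; rewrite /ws !hs_rcons //; lia.
rewrite {1}/ferrers_nodes size_rcons big_nat_recr //= E natrD natrM IH // natr_sum.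
rewrite hs_rcons_last.
rewrite (eq_bigr (fun b => ((2 * n - hs n (rcons s x) b.-1 - hs n (rcons s x) b)%N%:R : rat))) //.
rewrite telesc // hs_rcons_last.
have -> : \sum_(1 <= b < (size s).+1) ((hs n (rcons s x) b)%:R : rat) = sm s.
  rewrite (eq_big_nat _ _ (F2 := fun b => ((hs n s b)%:R : rat))); last first.
    by move=> b /andP[_ hb']; rewrite hs_rcons.
  by rewrite sm_nth // /sm [RHS](big_nth 0%N).
have -> : sm (rcons s x) = sm s + x%:R by rewrite /sm big_rcons.
have -> : pr (rcons s x) = pr s + 2 * (size s)%:R * x%:R + x%:R.
  rewrite /pr big_rcons /=; under eq_bigr => y _ do rewrite big_rcons /=.
  rewrite big_split /= big_rcons /= sum_min_const //.
  have -> : \sum_(j <- s) ((minn x j)%:R : rat) = (size s)%:R * x%:R.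
    by rewrite -sum_min_const //; apply: eq_bigr => y _; rewrite minnC.
  by rewrite minnn; ring.
rewrite /hs /=; ring.
Qed.
Definition G' (n a b : nat) := (minn a b * (n - maxn a b))%N.

Lemma Gid p i j : (i <= p)%N -> (j <= p)%N ->
  (2 * G' p.+2 i.+1 j.+1 = G' p.+2 i.+2 j.+1 + G' p.+2 i j.+1 + p.+2 * (i == j))%N.
Proof. rewrite /G' => hi hj. case: (ltngtP i j) => h.
- have e1 : minn i.+1 j.+1 = i.+1 by lia.
  have e2 : maxn i.+1 j.+1 = j.+1 by lia.
  have e3 : minn i.+2 j.+1 = i.+2 by lia.
  have e4 : maxn i.+2 j.+1 = j.+1 by lia.
  have e5 : minn i j.+1 = i by lia.
  have e6 : maxn i j.+1 = j.+1 by lia.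

  rewrite e1 e2 e3 e4 e5 e6. nia.
- have e1 : minn i.+1 j.+1 = j.+1 by lia.
  have e2 : maxn i.+1 j.+1 = i.+1 by lia.
  have e3 : minn i.+2 j.+1 = j.+1 by lia.
  have e4 : maxn i.+2 j.+1 = i.+2 by lia.
  have e5 : minn i j.+1 = j.+1 by lia.
  have e6 : maxn i j.+1 = i by lia.

  rewrite e1 e2 e3 e4 e5 e6. nia.
- subst j.
  have e1 : minn i.+1 i.+1 = i.+1 by lia.
  have e2 : maxn i.+1 i.+1 = i.+1 by lia.
  have e3 : minn i.+2 i.+1 = i.+1 by lia.
  have e4 : maxn i.+2 i.+1 = i.+2 by lia.
  have e5 : minn i i.+1 = i by lia.
  have e6 : maxn i i.+1 = i.+1 by lia.
  rewrite e1 e2 e3 e4 e5 e6. nia.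
Qed.

Lemma G0 n b : G' n 0 b = 0%N.
Proof. by rewrite /G' min0n. Qed.

Lemma Gtop p b : (b <= p.+1)%N -> G' p.+2 p.+2 b = 0%N.
Proof. move=> hb; rewrite /G'; have -> : maxn p.+2 b = p.+2 by lia. by rewrite subnn muln0. Qed.

Lemma Gquad n i j : (i.+1 < n)%N -> (j.+1 < n)%N ->
  (G' n i.+1 j.+1 + i.+1 * j.+1 = n * minn i.+1 j.+1)%N.
Proof.
rewrite /G' => hi hj; case: (leqP i j) => h.
- have e1 : minn i.+1 j.+1 = i.+1 by lia.
  have e2 : maxn i.+1 j.+1 = j.+1 by lia.
  rewrite e1 e2; nia.
- have e1 : minn i.+1 j.+1 = j.+1 by lia.
  have e2 : maxn i.+1 j.+1 = i.+1 by lia.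
  rewrite e1 e2; nia.
Qed.

Definition Cinv p : 'M[rat]_p.+1 :=
  \matrix_(i, j) ((G' p.+2 i.+1 j.+1)%:R / p.+2%:R).

Lemma sum_eq N c (f : nat -> rat) :
  \sum_(k < N) ((k == c :> nat)%:R * f k) = if (c < N)%N then f c else 0.
Proof.
elim: N => [|N IH]; first by rewrite big_ord0.
rewrite big_ord_recr /= IH.
case: (ltngtP c N) => h /=; rewrite ?mul0r ?mul1r ?addr0 ?add0r.
all: first [by rewrite ltnS leqNgt h | by rewrite h ltnSn | by rewrite ltnS ltnW | idtac].
Qed.

Lemma cartan_Cinv p : cartan p.+2 *m Cinv p = 1%:M.
Proof.
apply/matrixP => i j; rewrite !mxE.
set f := fun k : nat => ((G' p.+2 k.+1 j.+1)%:R / p.+2%:R : rat).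
rewrite (eq_bigr (fun k : 'I_p.+1 => 2 * ((k == i :> nat)%:R * f k) - (k == i.+1 :> nat)%:R * f k
   - (k.+1 == i :> nat)%:R * f k)); last first.
  move=> k _; rewrite !mxE /f natrM [(k:nat) == i]eq_sym [(k : nat) == i.+1]eq_sym; ring.
rewrite !sumrB -mulr_sumr !sum_eq ltn_ord.
have -> : \sum_(i0 < p.+1) (i0.+1 == i :> nat)%:R * f i0 = (G' p.+2 i j.+1)%:R / p.+2%:R.
  case: i => [[|i] hi] /=.
    by rewrite big1 ?G0 ?mul0r // => k _; rewrite mul0r.
  under eq_bigr => k _ do rewrite eqSS.
  by rewrite sum_eq (_ : (i < p.+1)%N) //; lia.
have -> : (if (i.+1 < p.+1)%N then f i.+1 else 0) = (G' p.+2 i.+2 j.+1)%:R / p.+2%:R.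
  case: ifP => // hi.
  have -> : (i : nat) = p by move: (ltn_ord i) hi; lia.
  by rewrite Gtop ?mul0r //; move: (ltn_ord j); lia.
have H := @Gid p i j (ltnSE (ltn_ord i)) (ltnSE (ltn_ord j)).
have HR : (2 : rat) * (G' p.+2 i.+1 j.+1)%:R
   = (G' p.+2 i.+2 j.+1)%:R + (G' p.+2 i j.+1)%:R + p.+2%:R * ((i : nat) == j)%:R.
  by apply/eqP; rewrite -!natrM -!natrD eqr_nat; apply/eqP; exact H.
rewrite /f.
have nz : (p.+2%:R : rat) != 0 by rewrite pnatr_eq0.
have -> : (2 : rat) * ((G' p.+2 i.+1 j.+1)%:R / p.+2%:R) - (G' p.+2 i.+2 j.+1)%:R / p.+2%:R
   - (G' p.+2 i j.+1)%:R / p.+2%:R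
   = (2 * (G' p.+2 i.+1 j.+1)%:R - (G' p.+2 i.+2 j.+1)%:R - (G' p.+2 i j.+1)%:R) / p.+2%:R.
  by ring.
rewrite HR.
have -> : ((G' p.+2 i.+2 j.+1)%:R + (G' p.+2 i j.+1)%:R + p.+2%:R * ((i:nat) == j)%:R
   - (G' p.+2 i.+2 j.+1)%:R - (G' p.+2 i j.+1)%:R : rat) = p.+2%:R * ((i:nat) == j)%:R by ring.
by rewrite mulrC mulKf.
Qed.

Lemma invmx_cartan p : invmx (cartan p.+2) = Cinv p.
Proof.
have [hu _] := mulmx1_unit (cartan_Cinv p).
by rewrite -[LHS]mulmx1 -(cartan_Cinv p) mulmxA mulVmx // mul1mx.
Qed.

Lemma sum_nseq c a (F : nat -> rat) : \sum_(x <- nseq c a) F x = c%:R * F a.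
Proof.
elim: c => [|c IH] /=; first by rewrite big_nil mul0r.
by rewrite big_cons IH -addn1 natrD; ring.
Qed.

Lemma sum_heights p (m : 'I_p.+1 -> nat) (F : nat -> rat) :
  \sum_(x <- heights (n := p.+2) m) F x = \sum_(j < p.+1) (m j)%:R * F j.+1.
Proof.
rewrite /heights big_flatten /= big_map big_rev.
under eq_bigr => j _ do rewrite sum_nseq.
by rewrite big_enum.
Qed.

Lemma size_heights p (m : 'I_p.+1 -> nat) :
  size (heights (n := p.+2) m) = (\sum_(j < p.+1) m j)%N.
Proof.
rewrite /heights size_flatten /shape -map_comp sumnE big_map big_rev.
by under eq_bigr => j _ do rewrite /= size_nseq; rewrite big_enum.
Qed.

Local Close Scope ring_scope.

Theorem lemma1 (n : nat) (k : 'I_n) (m : 'I_n.-1 -> nat)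
  (hn : 2 <= n)
  (hcong : (k + \sum_(i < n.-1) i.+1 * m i = 0 %[mod n])%N) :
  let N := (\sum_(i < n.-1) m i)%N in
  ((ferrers_nodes (wdt m) (hgt m) N)%:R : rat)
    = (n%:R * (mvec m *m invmx (cartan n) *m (mvec m)^T) ord0 ord0)%R.
Proof.
case: n k m hn hcong => [|[|p]] // k m _ _ N.
rewrite /N -(@size_heights p).
have -> : ferrers_nodes (wdt (n:=p.+2) m) (hgt (n:=p.+2) m)
  = ferrers_nodes (ws p.+2 (heights (n:=p.+2) m)) (hs p.+2 (heights (n:=p.+2) m)) by [].
rewrite key; last 2 first.
- rewrite /heights; apply: flatten_pairwise; exact: ord_rev_pairwise.
- apply/allP => x /flattenP[t] /mapP[j _ ->] /nseqP[-> _].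
  by move: (ltn_ord j) => /= ?; lia.
rewrite invmx_cartan /pr /sm.
Local Open Scope ring_scope.
under eq_bigr => x _ do rewrite sum_heights.
rewrite sum_heights sum_heights.
have nz : (p.+2%:R : rat) != 0 by rewrite pnatr_eq0.
transitivity (\sum_(i < p.+1) \sum_(j < p.+1) (m i)%:R * (m j)%:R * (G' p.+2 i.+1 j.+1)%:R : rat).
  rewrite expr2 mulr_suml mulr_sumr -sumrB; apply: eq_bigr => i _.
  rewrite !mulr_sumr -sumrB; apply: eq_bigr => j _.
  have -> : (G' p.+2 i.+1 j.+1)%:R = p.+2%:R * (minn i.+1 j.+1)%:R - i.+1%:R * j.+1%:R :> rat.
    apply/eqP; rewrite eq_sym subr_eq -!natrM -natrD eqr_nat.
    by rewrite (@Gquad p.+2 i j (ltn_ord i) (ltn_ord j)).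
  ring.
rewrite !mxE mulr_sumr exchange_big /=; apply: eq_bigr => j _.
rewrite !mxE mulr_suml mulr_sumr; apply: eq_bigr => i _.
rewrite !mxE /=.
rewrite (_ : forall a b c d : rat, a * (b * (c / a) * d) = b * d * c * (a / a)); last by move=> *; ring.
by rewrite divff // mulr1.
Qed.
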